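(* Let $a=\alpha_0A_0+\alpha_1A_1+\alpha_2A_2+\alpha_3A_3$ with $\alpha_i\in K[X]$, where $A_0=\begin{pmatrix} h_1&0\\ 0&h_1\end{pmatrix}$, $A_1=\begin{pmatrix} 0&0\\ 0&h_1\end{pmatrix}$, $A_2=\begin{pmatrix} 0&h_2\\ -h_3&h_4\end{pmatrix}$, $A_3=\begin{pmatrix} h_4&0\\ 0&h_4\end{pmatrix}$. If $a\in F$, then $a$ is strongly central in $F$.
   Context: $K$ is an infinite field of characteristic different from 2. Let $X=\{x_1,x_2,x_1',x_2'\}$ and $Y=\{y_1,y_2,y_1',y_2'\}$, and let $K[X;Y]\cong K[X]\otimes_K E(Y)$ be the free supercommutative algebra: the $x$'s are even commuting variables, the $y$'s are odd pairwise anticommuting variables, and $E(Y)$ is the Grassmann algebra on the vector space with basis $Y$. Put $C_1=\begin{pmatrix} x_1&y_1\\ y_1'&x_1'\end{pmatrix}$, $C_2=\begin{pmatrix} x_2&y_2\\ y_2'&x_2'\end{pmatrix}$, and let $F=K[C_1,C_2]$ be the unital $K$-subalgebra of $M_2(K[X;Y])$ generated by $C_1,C_2$; elements of $K[X]$ act on matrices as scalars. Define $h_1=y_1y_2y_1'y_2'$, $h_2=y_1y_2\big(y_1'(x_2'-x_2)-y_2'(x_1'-x_1)\big)$, $h_3=y_1'y_2'\big(y_1(x_2'-x_2)-y_2(x_1'-x_1)\big)$, $h_4=\big(y_1'(x_2'-x_2)-y_2'(x_1'-x_1)\big)\big(y_1(x_2'-x_2)-y_2(x_1'-x_1)\big)$.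 An element $a\in F$ is called strongly central if $a$ is central in $F$ and $ab$ is central in $F$ for every $b\in F$. *)

(* Defs.v *)
From HB Require Import structures.
From mathcomp Require Import all_boot all_order all_algebra.
From mathcomp Require Import mpoly.
Set Implicit Arguments. Unset Strict Implicit. Unset Printing Implicit Defensive.
Import GRing.Theory.
Local Open Scope ring_scope.

(* Model of the free supercommutative algebra K[X;Y] = K[X] (x) E(Y),
   with X = {x1,x2,x1',x2'} and Y = {y1,y2,y1',y2'}.
   K[X] = {mpoly K[4]} with x1 = 'X_0, x2 = 'X_1, x1' = 'X_2, x2' = 'X_3.
   K[X;Y] is realized faithfully through its left regular representation
   on the free K[X]-module with basis the 16 monomials y_S (S subset of
   {0,1,2,3}, encoded by the bits of an index in 'I_16): K[X] acts by
   scalar matrices and y_i acts by the (signed) creation operator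
   y_i y_S = (-1)^{#{j in S | j < i}} y_{S u {i}} (or 0 if i in S).
   Thus SA K := 'M[{mpoly K[4]}]_16 is the ambient ring, and the
   relevant elements all lie in the subalgebra generated by K[X] and the y_i,
   which is isomorphic to K[X;Y]. *)

Definition SA (K : fieldType) := 'M[{mpoly K[4]}]_16.

Definition bitS (c : nat) (i : nat) : nat := odd (c %/ 2 ^ i).

Definition ygen (K : fieldType) (i : 'I_4) : SA K :=
  \matrix_(r < 16, c < 16)
    if (bitS c i == 0)%N && (val r == val c + 2 ^ i)%N
    then (-1) ^+ (\sum_(j < 4 | (j < i)%N) bitS c j)
    else 0.

Definition xgen (K : fieldType) (i : 'I_4) : SA K := ('X_i : {mpoly K[4]})%:M.

Definition polyS (K : fieldType) (p : {mpoly K[4]}) : SA K := p%:M.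

Definition y1 K := @ygen K (inord 0).
Definition y2 K := @ygen K (inord 1).
Definition y1' K := @ygen K (inord 2).
Definition y2' K := @ygen K (inord 3).
Definition x1 K := @xgen K (inord 0).
Definition x2 K := @xgen K (inord 1).
Definition x1' K := @xgen K (inord 2).
Definition x2' K := @xgen K (inord 3).

Definition mx2 (R : Type) (a b c d : R) : 'M[R]_2 :=
  \matrix_(i < 2, j < 2)
    if i == ord0 then (if j == ord0 then a else b)
    else (if j == ord0 then c else d).

Definition C1 K : 'M[SA K]_2 := mx2 (x1 K) (y1 K) (y1' K) (x1' K).
Definition C2 K : 'M[SA K]_2 := mx2 (x2 K) (y2 K) (y2' K) (x2' K).

Inductive inF (K : fieldType) : 'M[SA K]_2 -> Prop :=
  | inF_scal (k : K) : inF ((polyS (k%:MP))%:M)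
  | inF_C1 : inF (C1 K)
  | inF_C2 : inF (C2 K)
  | inF_add a b : inF a -> inF b -> inF (a + b)
  | inF_mul a b : inF a -> inF b -> inF (a * b).

Definition centralF K (a : 'M[SA K]_2) : Prop :=
  forall b, inF b -> a * b = b * a.

Definition strongly_centralF K (a : 'M[SA K]_2) : Prop :=
  centralF a /\ forall b, inF b -> centralF (a * b).

Definition h1 K : SA K := y1 K * y2 K * y1' K * y2' K.
Definition lY K : SA K := y1' K * (x2' K - x2 K) - y2' K * (x1' K - x1 K).
Definition rY K : SA K := y1 K * (x2' K - x2 K) - y2 K * (x1' K - x1 K).
Definition h2 K : SA K := y1 K * y2 K * lY K.
Definition h3 K : SA K := y1' K * y2' K * rY K.
Definition h4 K : SA K := lY K * rY K.

Definition A0 K : 'M[SA K]_2 := mx2 (h1 K) 0 0 (h1 K).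
Definition A1 K : 'M[SA K]_2 := mx2 0 0 0 (h1 K).
Definition A2 K : 'M[SA K]_2 := mx2 0 (h2 K) (- h3 K) (h4 K).
Definition A3 K : 'M[SA K]_2 := mx2 (h4 K) 0 0 (h4 K).

(* Main.v *)
Require Import Defs.
From HB Require Import structures.
From mathcomp Require Import all_boot all_order all_algebra.
From mathcomp Require Import mpoly.
From mathcomp Require Import ring.
From Stdlib Require Import PeanoNat.
Set Implicit Arguments. Unset Strict Implicit. Unset Printing Implicit Defensive.
Import GRing.Theory.
Local Open Scope ring_scope.

Definition subb (c r : nat) : bool := (Nat.land c r == c)%N.
Definition disj (S T : nat) : bool := (Nat.land S T == 0)%N.
Definition nb (S i : nat) : nat := nat_of_bool (Nat.testbit S i).
Definition sgn (S T : nat) : nat :=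
  (nb S 1 * nb T 0 + nb S 2 * (nb T 0 + nb T 1) + nb S 3 * (nb T 0 + nb T 1 + nb T 2))%N.

Definition chk1 r c S T :=
  ((subb (Nat.lxor r S) r && subb c (Nat.lxor r S) && (Nat.lxor (Nat.lxor r S) c == T)%N)
   == (disj S T && subb c r && (Nat.lxor r c == Nat.lor S T)%N))
  && (~~ (disj S T && subb c r && (Nat.lxor r c == Nat.lor S T)%N) ||
      (odd (sgn S (Nat.lxor r S) + sgn T c) == odd (sgn (Nat.lor S T) c + sgn S T))).

Definition all16 (f : nat -> bool) := all f (iota 0 16).

Lemma chk1_ok : all16 (fun r => all16 (fun c => all16 (fun S => all16 (fun T => chk1 r c S T)))).
Proof. vm_compute. reflexivity. Qed.

Lemma all16P f : all16 f -> forall n, (n < 16)%N -> f n.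
Proof. by move=> /allP H n hn; apply: H; rewrite mem_iota. Qed.

Lemma xor_lt : all16 (fun r => all16 (fun S => Nat.lxor r S < 16))%N.
Proof. vm_compute. reflexivity. Qed.

Lemma xor_inv r k S : Nat.lxor r k = S -> k = Nat.lxor r S.
Proof. by move=> <-; rewrite -Nat.lxor_assoc Nat.lxor_nilpotent Nat.lxor_0_l. Qed.

Section G.
Variable P : comNzRingType.
Local Notation M := 'M[P]_16.

Definition sg (n : nat) (x : P) : P := if odd n then - x else x.

Lemma sgM a b p q : sg a p * sg b q = sg (a + b) (p * q).
Proof. rewrite /sg oddD; case: (odd a); case: (odd b) => /=; by rewrite ?mulNr ?mulrN ?opprK. Qed.
Lemma sgS a b p : sg a (sg b p) = sg (b + a) p.
Proof. rewrite /sg oddD; case: (odd a); case: (odd b) => /=; by rewrite ?opprK. Qed.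
Lemma sg_odd a b p : odd a = odd b -> sg a p = sg b p.
Proof. by rewrite /sg => ->. Qed.

Definition Lmono (S : nat) (p : P) : M :=
  \matrix_(r, c) if subb c r && (Nat.lxor r c == S)%N then sg (sgn S c) p else 0.

Lemma mono_mul S T p q : (S < 16)%N -> (T < 16)%N ->
  Lmono S p *m Lmono T q =
  if disj S T then Lmono (Nat.lor S T) (sg (sgn S T) (p * q)) else 0.
Proof.
move=> hS hT; apply/matrixP => r c; rewrite !mxE.
have hrS : (Nat.lxor r S < 16)%N by apply: (all16P (all16P xor_lt (ltn_ord r))).
rewrite (bigD1 (Ordinal hrS)) //= big1 ?addr0; last first.
  move=> k hk; rewrite !mxE.
  case: eqP => [/xor_inv E|]; last by rewrite andbF mul0r.
  by case/eqP: hk; apply: val_inj => /=.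
have := all16P (all16P (all16P (all16P chk1_ok (ltn_ord r)) (ltn_ord c)) hS) hT.
rewrite /chk1 !mxE /=.
have -> : Nat.lxor r (Nat.lxor r S) = S.
  by rewrite -Nat.lxor_assoc Nat.lxor_nilpotent Nat.lxor_0_l.
rewrite eqxx andbT.
set A1 := subb (Nat.lxor r S) r. set A2 := subb c (Nat.lxor r S).
set A3 := (Nat.lxor (Nat.lxor r S) c == T)%N.
set B1 := disj S T. set B2 := subb c r. set B3 := (Nat.lxor r c == Nat.lor S T)%N.
case: B1; rewrite !mxE -/B2 -/B3;
case: A1; case: A2; case: A3; case: B2; case: B3 => //= /eqP Ho;
  rewrite ?mxE ?mul0r ?mulr0 //=.
by rewrite sgM sgS; apply: sg_odd; rewrite Ho addnC.
Qed.

Definition Lm (l : seq (nat * P)) : M := \sum_(m <- l) Lmono m.1 m.2.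
Definition mprod (m1 m2 : nat * P) : seq (nat * P) :=
  if disj m1.1 m2.1 then [:: (Nat.lor m1.1 m2.1, sg (sgn m1.1 m2.1) (m1.2 * m2.2))] else [::].
Definition smul (l1 l2 : seq (nat * P)) : seq (nat * P) :=
  flatten [seq flatten [seq mprod m1 m2 | m2 <- l2] | m1 <- l1].
Definition ok16 (l : seq (nat * P)) := all (fun m => m.1 < 16)%N l.

Lemma Lm_cat l1 l2 : Lm (l1 ++ l2) = Lm l1 + Lm l2.
Proof. by rewrite /Lm big_cat. Qed.
Lemma Lm_cons m l : Lm (m :: l) = Lmono m.1 m.2 + Lm l.
Proof. by rewrite /Lm big_cons. Qed.
Lemma Lm_nil : Lm [::] = 0.
Proof. by rewrite /Lm big_nil. Qed.

Lemma Lm_mul l1 l2 : ok16 l1 -> ok16 l2 -> Lm l1 * Lm l2 = Lm (smul l1 l2).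
Proof.
move=> h1 h2; elim: l1 h1 => [|m1 l1 IH] /=; first by rewrite /smul /Lm /= !big_nil mul0r.
case/andP=> hm1 h1.
rewrite /smul /= Lm_cat -/(smul l1 l2) -IH // Lm_cons mulrDl; congr (_ + _).
elim: l2 h2 {IH} => [|m2 l2 IH] /=; first by rewrite /Lm !big_nil mulr0.
case/andP=> hm2 h2; rewrite Lm_cat -IH // Lm_cons mulrDr; congr (_ + _).
rewrite /mprod -mulmxE mono_mul //; case: ifP => _; last by rewrite Lm_nil.
by rewrite Lm_cons Lm_nil addr0.
Qed.

Lemma Lm_opp l : - Lm l = Lm [seq (m.1, - m.2) | m <- l].
Proof.
elim: l => [|m l IH] /=; first by rewrite !Lm_nil oppr0.
rewrite !Lm_cons opprD IH; congr (_ + _).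
apply/matrixP => r c; rewrite !mxE /=; case: ifP => _; last by rewrite oppr0.
by rewrite /sg; case: odd.
Qed.

Fixpoint coefl (l : seq (nat * P)) (S : nat) : P :=
  if l is m :: l' then (if (m.1 == S)%N then m.2 else 0) + coefl l' S else 0.

Lemma Lmono_add S p q : Lmono S (p + q) = Lmono S p + Lmono S q.
Proof.
apply/matrixP => r c; rewrite !mxE; case: ifP => _; last by rewrite addr0.
by rewrite /sg; case: odd; rewrite ?opprD.
Qed.
Lemma Lmono0 S : Lmono S 0 = 0.
Proof.
apply/matrixP => r c; rewrite !mxE; case: ifP => _ //.
by rewrite /sg; case: odd; rewrite ?oppr0.
Qed.

Lemma Lm_coef l : ok16 l -> Lm l = \sum_(S < 16) Lmono S (coefl l S).
Proof.
elim: l => [|m l IH] /=.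
  by rewrite Lm_nil big1 // => S _; rewrite Lmono0.
case/andP=> hm hl; rewrite Lm_cons IH //.
under eq_bigr do rewrite Lmono_add.
rewrite big_split /=; congr (_ + _).
rewrite (bigD1 (Ordinal hm)) //= eqxx big1 ?addr0 // => S hS.
by case: eqP => [E|]; [case/eqP: hS; apply: val_inj; rewrite /= E | rewrite Lmono0].
Qed.

Definition allS (F : nat -> Prop) := forall S, (S < 16)%N -> F S.
Lemma allS_intro F : F 0%N -> F 1%N -> F 2%N -> F 3%N -> F 4%N -> F 5%N -> F 6%N -> F 7%N ->
  F 8%N -> F 9%N -> F 10%N -> F 11%N -> F 12%N -> F 13%N -> F 14%N -> F 15%N -> allS F.
Proof.
move=> ? ? ? ? ? ? ? ? ? ? ? ? ? ? ? ? S.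
by do 16 (case: S => [|S] //).
Qed.

Lemma eqLm l1 l2 : allS (fun S => coefl l1 S = coefl l2 S) -> ok16 l1 -> ok16 l2 -> Lm l1 = Lm l2.
Proof.
move=> H h1 h2; rewrite !Lm_coef //; apply: eq_bigr => S _.
by rewrite H.
Qed.

End G.

Inductive pe := PV of nat | P0 | P1 | PAdd of pe & pe | PMul of pe & pe | POpp of pe.

Section E.
Variable P : comNzRingType.
Variable env : nat -> P.
Fixpoint pev (e : pe) : P :=
  match e with
  | PV n => env n | P0 => 0 | P1 => 1
  | PAdd a b => pev a + pev b | PMul a b => pev a * pev b | POpp a => - pev a
  end.
Definition ev (l : seq (nat * pe)) : seq (nat * P) := [seq (m.1, pev m.2) | m <- l].
Definition sge (n : nat) (e : pe) := if odd n then POpp e else e.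
Definition mprode (m1 m2 : nat * pe) : seq (nat * pe) :=
  if disj m1.1 m2.1 then [:: (Nat.lor m1.1 m2.1, sge (sgn m1.1 m2.1) (PMul m1.2 m2.2))] else [::].
Definition smule (l1 l2 : seq (nat * pe)) : seq (nat * pe) :=
  flatten [seq flatten [seq mprode m1 m2 | m2 <- l2] | m1 <- l1].
Definition oppe (l : seq (nat * pe)) := [seq (m.1, POpp m.2) | m <- l].
Fixpoint coefe (l : seq (nat * pe)) (S : nat) : pe :=
  if l is m :: l' then (if (m.1 == S)%N then PAdd m.2 (coefe l' S) else coefe l' S) else P0.
Definition ok16e (l : seq (nat * pe)) := all (fun m => m.1 < 16)%N l.

Lemma ev_cat l1 l2 : ev (l1 ++ l2) = ev l1 ++ ev l2.
Proof. by rewrite /ev map_cat. Qed.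
Lemma ev_flatten (s : seq (seq (nat * pe))) : ev (flatten s) = flatten (map ev s).
Proof. elim: s => //= a s IH; by rewrite ev_cat IH. Qed.

Lemma ev_mprod m1 m2 : ev (mprode m1 m2) = mprod (m1.1, pev m1.2) (m2.1, pev m2.2).
Proof. rewrite /mprode /mprod /=; case: ifP => // _. by rewrite /= /sge /sg; case: odd. Qed.

Lemma ev_smul l1 l2 : ev (smule l1 l2) = smul (ev l1) (ev l2).
Proof.
elim: l1 => //= m1 l1 IH.
rewrite /smule /smul /= ev_cat -/(smule l1 l2) IH; congr (_ ++ _).
elim: l2 {IH} => //= m2 l2 IH.
by rewrite ev_cat IH ev_mprod.
Qed.

Lemma ok16_ev l : ok16 (ev l) = ok16e l.
Proof. by rewrite /ok16 /ev all_map. Qed.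

Lemma coef_ev l S : coefl (ev l) S = pev (coefe l S).
Proof. elim: l => //= m l ->; by case: ifP; rewrite ?add0r. Qed.

Lemma Lm_mul_e l1 l2 : ok16e l1 -> ok16e l2 ->
  Lm (ev l1) * Lm (ev l2) = Lm (ev (smule l1 l2)).
Proof. by move=> h1 h2; rewrite ev_smul Lm_mul // ok16_ev. Qed.
Lemma Lm_add_e l1 l2 : Lm (ev l1) + Lm (ev l2) = Lm (ev (l1 ++ l2)).
Proof. by rewrite ev_cat Lm_cat. Qed.
Lemma Lm_opp_e l : - Lm (ev l) = Lm (ev (oppe l)).
Proof. by rewrite Lm_opp /ev /oppe -!map_comp. Qed.
Lemma Lm_nil_e : Lm (ev [::]) = 0.
Proof. exact: Lm_nil. Qed.

Lemma eqLm_e l1 l2 : allS (fun S => pev (coefe l1 S) = pev (coefe l2 S)) ->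
  ok16e l1 -> ok16e l2 -> Lm (ev l1) = Lm (ev l2).
Proof.
move=> H h1 h2; apply: eqLm; rewrite ?ok16_ev //.
by move=> S hS; rewrite !coef_ev H.
Qed.
End E.

Ltac solve_coef := match goal with |- pev ?env ?a = pev ?env ?b =>
  let a' := eval vm_compute in a in let b' := eval vm_compute in b in
  change (pev env a' = pev env b') end; cbn [pev]; ring.
Ltac solve_Lm := apply: eqLm_e; [apply: allS_intro; solve_coef | by vm_compute | by vm_compute].

Definition sumb c i : nat :=
  ((if 0 < i then bitS c 0 else 0) + (if 1 < i then bitS c 1 else 0) +
   (if 2 < i then bitS c 2 else 0) + (if 3 < i then bitS c 3 else 0))%N.
Definition ychk (i r c : nat) :=
  let cond := ((bitS c i == 0) && (r == c + expn 2 i))%N in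
  (cond == (subb c r && (Nat.lxor r c == expn 2 i)%N)) &&
  (~~ cond || (odd (sumb c i) == odd (sgn (expn 2 i) c))).
Lemma ychk_ok : all (fun i => all16 (fun r => all16 (fun c => ychk i r c))) (iota 0 4).
Proof. vm_compute. reflexivity. Qed.

Lemma sign_sg (P : comNzRingType) n : (-1) ^+ n = sg n (1 : P).
Proof. by rewrite -signr_odd /sg; case: odd; rewrite ?expr1 ?expr0. Qed.

Lemma ygen_Lmono (K : fieldType) (i : 'I_4) : ygen K i = Lmono (expn 2 i) 1.
Proof.
apply/matrixP => r c; rewrite !mxE.
have Hi : (nat_of_ord i \in iota 0 4) by rewrite mem_iota /=; apply: ltn_ord.
have := all16P (all16P (allP ychk_ok _ Hi) (ltn_ord r)) (ltn_ord c).
have -> : (\sum_(j < 4 | (j < i)%N) bitS c j)%N = sumb c i.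
  by rewrite big_mkcond !big_ord_recl big_ord0 /= addn0 !addnA.
rewrite /ychk /=.
case: ifP => hA; case: ifP => hB; rewrite ?hA ?hB //= => /eqP Ho.
by rewrite sign_sg; apply: sg_odd.
Qed.

Lemma Lmono0_scalar (P : comNzRingType) (p : P) : Lmono 0 p = p%:M.
Proof.
apply/matrixP => r c; rewrite !mxE.
have : all16 (fun r => all16 (fun c => (subb c r && (Nat.lxor r c == 0)%N) == (r == c)%N)).
  by vm_compute.
move=> /all16P /(_ _ (ltn_ord r)) /all16P /(_ _ (ltn_ord c)) /eqP ->.
rewrite /sgn /nb /=.
by case: eqP => [/val_inj ->|]; rewrite ?eqxx ?mulr1n //; case: eqP => // ->.
Qed.

Lemma Lm1 (P : comNzRingType) (env : nat -> P) S p : Lm (ev env [:: (S, p)]) = Lmono S (pev env p).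
Proof. by rewrite /Lm big_seq1. Qed.

Section Link.
Variable K : fieldType.
Variable env : nat -> {mpoly K[4]}.
Hypothesis env0 : env 0%N = 'X_(inord 0).
Hypothesis env1 : env 1%N = 'X_(inord 1).
Hypothesis env2 : env 2%N = 'X_(inord 2).
Hypothesis env3 : env 3%N = 'X_(inord 3).

Lemma y1E : y1 K = Lm (ev env [:: (1%N, P1)]).
Proof. by rewrite Lm1 /y1 ygen_Lmono inordK. Qed.
Lemma y2E : y2 K = Lm (ev env [:: (2%N, P1)]).
Proof. by rewrite Lm1 /y2 ygen_Lmono inordK. Qed.
Lemma y1'E : y1' K = Lm (ev env [:: (4%N, P1)]).
Proof. by rewrite Lm1 /y1' ygen_Lmono inordK. Qed.
Lemma y2'E : y2' K = Lm (ev env [:: (8%N, P1)]).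
Proof. by rewrite Lm1 /y2' ygen_Lmono inordK. Qed.
Lemma x1E : x1 K = Lm (ev env [:: (0%N, PV 0)]).
Proof. by rewrite Lm1 /= env0 Lmono0_scalar. Qed.
Lemma x2E : x2 K = Lm (ev env [:: (0%N, PV 1)]).
Proof. by rewrite Lm1 /= env1 Lmono0_scalar. Qed.
Lemma x1'E : x1' K = Lm (ev env [:: (0%N, PV 2)]).
Proof. by rewrite Lm1 /= env2 Lmono0_scalar. Qed.
Lemma x2'E : x2' K = Lm (ev env [:: (0%N, PV 3)]).
Proof. by rewrite Lm1 /= env3 Lmono0_scalar. Qed.
Lemma polySE n p : env n = p -> polyS p = Lm (ev env [:: (0%N, PV n)]).
Proof. by move=> E; rewrite Lm1 /= E Lmono0_scalar. Qed.
End Link.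

Lemma mx2_mul (R : nzRingType) (a b c d e f g h : R) :
  mx2 a b c d * mx2 e f g h = mx2 (a*e+b*g) (a*f+b*h) (c*e+d*g) (c*f+d*h).
Proof.
apply/matrixP => i j; rewrite !mxE !big_ord_recl big_ord0 !mxE addr0 /=.
by case: i => [[|[|//]]] ? ; case: j => [[|[|//]]] ?.
Qed.
Lemma mx2_add (R : nzRingType) (a b c d e f g h : R) :
  mx2 a b c d + mx2 e f g h = mx2 (a+e) (b+f) (c+g) (d+h).
Proof.
apply/matrixP => i j; rewrite !mxE /=.
by case: i => [[|[|//]]] ? ; case: j => [[|[|//]]] ?.
Qed.
Lemma mx2_scale (R : nzRingType) (s a b c d : R) :
  s *: mx2 a b c d = mx2 (s*a) (s*b) (s*c) (s*d).
Proof.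
apply/matrixP => i j; rewrite !mxE /=.
by case: i => [[|[|//]]] ? ; case: j => [[|[|//]]] ?.
Qed.

Lemma mx2_eq (R : Type) (a b c d a' b' c' d' : R) :
  a = a' -> b = b' -> c = c' -> d = d' -> mx2 a b c d = mx2 a' b' c' d'.
Proof. by move=> -> -> -> ->. Qed.

Ltac lm_norm := repeat first [ rewrite Lm_mul_e; [| by vm_compute | by vm_compute]
                             | rewrite Lm_add_e | rewrite Lm_opp_e ].

Section Main.
Variable K : fieldType.
Variables al0 al1 al2 al3 : {mpoly K[4]}.
Definition envM : nat -> {mpoly K[4]} :=
  fun n => nth 0 [:: 'X_(inord 0); 'X_(inord 1); 'X_(inord 2); 'X_(inord 3); al0; al1; al2; al3] n.
Definition aM : 'M[SA K]_2 :=
  polyS al0 *: A0 K + polyS al1 *: A1 K + polyS al2 *: A2 K + polyS al3 *: A3 K.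

Ltac to_Lm :=
  rewrite /h1 /h2 /h3 /h4 /lY /rY;
  rewrite ?(y1E envM) ?(y2E envM) ?(y1'E envM) ?(y2'E envM)
          ?(@x1E _ envM (erefl _)) ?(@x2E _ envM (erefl _)) ?(@x1'E _ envM (erefl _)) ?(@x2'E _ envM (erefl _))
          ?(@polySE _ envM 4 al0 (erefl _)) ?(@polySE _ envM 5 al1 (erefl _))
          ?(@polySE _ envM 6 al2 (erefl _)) ?(@polySE _ envM 7 al3 (erefl _));
  lm_norm.

Lemma aC1 : aM * C1 K = C1 K * aM.
Proof.
rewrite /aM /C1 /A0 /A1 /A2 /A3 -!(Lm_nil_e envM) !mx2_scale !mx2_add !mx2_mul.
apply: mx2_eq. all: to_Lm. all: solve_Lm.
Qed.
Lemma aC2 : aM * C2 K = C2 K * aM.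
Proof.
rewrite /aM /C2 /A0 /A1 /A2 /A3 -!(Lm_nil_e envM) !mx2_scale !mx2_add !mx2_mul.
apply: mx2_eq. all: to_Lm. all: solve_Lm.
Qed.

Lemma aC12 : aM * (C1 K * C2 K) = aM * (C2 K * C1 K).
Proof.
rewrite /aM /C1 /C2 /A0 /A1 /A2 /A3 -!(Lm_nil_e envM) !mx2_scale !mx2_add !mx2_mul.
apply: mx2_eq. all: to_Lm. all: solve_Lm.
Qed.

Definition Sc (k : K) : 'M[SA K]_2 := (polyS (k%:MP))%:M.

Lemma scal_comm (s : SA K) (B : 'M[SA K]_2) :
  (forall X : SA K, s * X = X * s) -> s%:M * B = B * s%:M.
Proof.
move=> H; rewrite -!mulmxE mul_scalar_mx; apply/matrixP => i j.
rewrite !mxE (bigD1 j) //= big1; last first.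
  by move=> k hk; rewrite !mxE (negbTE hk) mulr0n mulr0.
by rewrite addr0 !mxE eqxx mulr1n H.
Qed.

Lemma polyS_comm (p : {mpoly K[4]}) (X : SA K) : polyS p * X = X * polyS p.
Proof. rewrite /polyS -!mulmxE. exact: (esym (@scalar_mxC _ 16 16 p X)). Qed.

Lemma Sc_comm k B : Sc k * B = B * Sc k.
Proof. rewrite /Sc. apply: (@scal_comm (polyS (k%:MP)) B). exact: polyS_comm. Qed.

Section Abs.
Variable a : 'M[SA K]_2.
Hypothesis aC1 : a * C1 K = C1 K * a.
Hypothesis aC2 : a * C2 K = C2 K * a.
Hypothesis aC12 : a * (C1 K * C2 K) = a * (C2 K * C1 K).

Lemma central_gen b : inF b -> a * b = b * a.
Proof.
elim => [k|||x y _ IHx _ IHy|x y _ IHx _ IHy].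
- exact: (esym (Sc_comm k a)).
- exact: aC1.
- exact: aC2.
- rewrite mulrDr mulrDl IHx IHy; exact: erefl.
- rewrite mulrA IHx -mulrA IHy; exact: mulrA.
Qed.

Lemma comm_g g :
  (forall c, c = C1 K \/ c = C2 K -> a * (g * c) = a * (c * g)) ->
  (forall k, g * Sc k = Sc k * g) ->
  forall c, inF c -> a * (g * c) = a * (c * g).
Proof.
move=> Hgen Hs c; elim => [k|||x y _ IHx _ IHy|x y Hx IHx _ IHy].
- exact: (congr1 (fun t => a * t) (Hs k)).
- by apply: Hgen; left.
- by apply: Hgen; right.
- rewrite mulrDr mulrDl !mulrDr IHx IHy; exact: erefl.
-
  have E1 : a * (g * (x * y)) = a * (g * x) * y := ltac:(rewrite !mulrA; exact: erefl).
  have F1 : a * (x * g) * y = x * (a * (g * y)) := ltac:(rewrite !mulrA (central_gen Hx); exact: erefl).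
  have F2 : x * (a * (y * g)) = a * (x * y * g) := ltac:(rewrite !mulrA (central_gen Hx); exact: erefl).
  rewrite E1 IHx F1 IHy F2; exact: erefl.
Qed.

Lemma comm_all b c : inF b -> inF c -> a * (b * c) = a * (c * b).
Proof.
move=> Hb; elim: Hb c => [k|||x y _ IHx _ IHy|x y Hx IHx _ IHy] c Hc.
- exact: (congr1 (fun t => a * t) (Sc_comm k c)).
- apply: comm_g; last exact: Hc.
  + move=> d [->|->]; [exact: erefl | exact: aC12].
  + move=> k; exact: (esym (Sc_comm k (C1 K))).
- apply: comm_g; last exact: Hc.
  + move=> d [->|->]; [exact: (esym aC12) | exact: erefl].
  + move=> k; exact: (esym (Sc_comm k (C2 K))).
- rewrite mulrDl mulrDr !mulrDr (IHx c Hc) (IHy c Hc); exact: erefl.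
-
  have E1 : a * (x * y * c) = x * (a * (y * c)) := ltac:(rewrite !mulrA (central_gen Hx); exact: erefl).
  have E2 : a * (c * (x * y)) = a * (c * x) * y := ltac:(rewrite !mulrA; exact: erefl).
  have E3 : x * (a * (c * y)) = a * (x * c) * y := ltac:(rewrite !mulrA (central_gen Hx); exact: erefl).
  rewrite E1 (IHy c Hc) E3 (IHx c Hc) -E2; exact: erefl.
Qed.

Lemma a_strong : strongly_centralF a.
Proof.
split; first by move=> b Hb; apply: central_gen.
move=> b Hb c Hc.
rewrite -mulrA (comm_all Hb Hc) mulrA (central_gen Hc); exact: (esym (mulrA c a b)).
Qed.

End Abs.

Lemma aM_strong : strongly_centralF aM.
Proof. exact: (a_strong aC1 aC2 aC12). Qed.

End Main.

Theorem lemma5 (K : fieldType)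
  (K_infinite : forall s : seq K, exists x : K, x \notin s)
  (K_char_not2 : (2%:R : K) != 0)
  (al0 al1 al2 al3 : {mpoly K[4]}) :
  let a : 'M[SA K]_2 :=
    polyS al0 *: A0 K + polyS al1 *: A1 K + polyS al2 *: A2 K + polyS al3 *: A3 K in
  inF a -> strongly_centralF a.
Proof.
move=> a _; exact: (aM_strong al0 al1 al2 al3).
Qed.
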